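(* Let $r_1=1/4$, $r_n=\frac1{2n}$ for $n\ge2$, and $p_n=\frac12+r_n$, $q_n=1-p_n$, $\rho_n=q_n/p_n$ for $n\ge1$. Then for every $\varepsilon>0$ there exists $i_0>0$ such that $$(1-\varepsilon)\frac{i(j-i)}{j}\le D(i,j)\le(1+\varepsilon)\frac{i(j-i)}{j}\quad\text{for all }j>i\ge i_0,$$ $$(1-\varepsilon)i\le D(i)\le(1+\varepsilon)i\quad\text{for all }i\ge i_0.$$
   Context: For integers $n\ge m\ge0$ let $D(m,n)=0$ if $n=m$, $D(m,n)=1$ if $n=m+1$, and $D(m,n)=1+\sum_{j=1}^{n-m-1}\rho_{m+1}\cdots\rho_{m+j}$ if $n\ge m+2$; let $D(m)=\lim_{n\to\infty}D(m,n)$. *)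

(* Defs.v *)
From Stdlib Require Import Reals Lra Lia.
From Coquelicot Require Import Coquelicot.
Open Scope R_scope.

Definition r (n : nat) : R := if (n <=? 1)%nat then 1/4 else 1 / (2 * INR n).
Definition p (n : nat) : R := 1/2 + r n.
Definition q (n : nat) : R := 1 - p n.
Definition rho (n : nat) : R := q n / p n.

Fixpoint prod_rho (m j : nat) : R :=
  match j with
  | O => 1
  | S j' => prod_rho m j' * rho (m + S j')
  end.

Fixpoint sum_prod (m N : nat) : R :=
  match N with
  | O => 0
  | S N' => sum_prod m N' + prod_rho m (S N')
  end.

(* D(m,n) for n >= m: 0 if n = m, and 1 + sum_{j=1}^{n-m-1} ... otherwise
   (for n = m+1 the sum is empty, giving 1). Value for n < m is irrelevant (0). *)
Definition Dmn (m n : nat) : R :=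
  if (n <=? m)%nat then 0 else 1 + sum_prod m (n - m - 1).

Definition Dlim (m : nat) : Rbar := Lim_seq (fun n => Dmn m n).

(* Main.v *)
Require Import Defs.
From Stdlib Require Import Reals Lra Lia.
From Coquelicot Require Import Coquelicot.
Local Open Scope R_scope.

Lemma rho_val k : (2 <= k)%nat -> rho k = (INR k - 1) / (INR k + 1).
Proof.
  intros Hk. unfold rho, q, p, r.
  destruct (k <=? 1)%nat eqn:E; [apply Nat.leb_le in E; lia|].
  assert (H2 : 2 <= INR k) by (replace 2 with (INR 2) by (simpl; lra); apply le_INR; lia).
  field; lra.
Qed.

Lemma prod_val m j : (1 <= m)%nat ->
  prod_rho m j = INR m * (INR m + 1) / (INR (m + j) * (INR (m + j) + 1)).
Proof.
  intros Hm. assert (H1 : 1 <= INR m) by (replace 1 with (INR 1) by (simpl; lra); apply le_INR; lia).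
  induction j as [|j IH]; simpl prod_rho.
  - rewrite Nat.add_0_r. field. lra.
  - rewrite IH, rho_val by lia. rewrite !plus_INR, !S_INR.
    assert (0 <= INR j) by apply pos_INR. field. lra.
Qed.

Lemma sum_val m N : (1 <= m)%nat ->
  1 + sum_prod m N = (INR m + 1) * (INR N + 1) / (INR m + INR N + 1).
Proof.
  intros Hm. assert (H1 : 1 <= INR m) by (replace 1 with (INR 1) by (simpl; lra); apply le_INR; lia).
  induction N as [|N IH].
  - simpl. field. lra.
  - change (sum_prod m (S N)) with (sum_prod m N + prod_rho m (S N)).
    rewrite <- Rplus_assoc, IH, prod_val by lia. rewrite !plus_INR, !S_INR.
    assert (0 <= INR N) by apply pos_INR. idtac. field. lra.
Qed.

Lemma Dmn_val m n : (1 <= m)%nat -> (m < n)%nat ->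
  Dmn m n = (INR m + 1) * (INR n - INR m) / INR n.
Proof.
  intros Hm Hn. unfold Dmn.
  destruct (n <=? m)%nat eqn:E; [apply Nat.leb_le in E; lia|].
  rewrite sum_val by lia.
  assert (E2 : INR (n - m - 1) = INR n - INR m - 1).
  { rewrite !minus_INR by lia. simpl. ring. }
  rewrite E2. assert (INR m < INR n) by (apply lt_INR; lia).
  assert (0 < INR m) by (apply lt_0_INR; lia). field. lra.
Qed.

Lemma Dlim_val m : (1 <= m)%nat -> Dlim m = Finite (INR m + 1).
Proof.
  intros Hm. unfold Dlim. apply is_lim_seq_unique.
  apply is_lim_seq_ext_loc with (u := fun n => (INR m + 1) - (INR m + 1) * INR m * / INR n).
  - exists (S m). intros n Hn. rewrite Dmn_val by lia.
    assert (0 < INR n) by (apply lt_0_INR; lia). field. lra.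
  - replace (INR m + 1) with ((INR m + 1) - (INR m + 1) * INR m * 0) at 1 by ring.
    apply is_lim_seq_minus'. apply is_lim_seq_const.
    assert (L : is_lim_seq (fun n => / INR n) (Rbar_inv p_infty)).
    { apply is_lim_seq_inv. apply is_lim_seq_INR. discriminate. }
    pose proof (is_lim_seq_scal_l _ ((INR m + 1) * INR m) _ L) as L2.
    exact L2.
Qed.

Theorem lemma11 (eps : R) (Heps : 0 < eps) :
  exists i0 : nat, (0 < i0)%nat /\
    (forall i j : nat, (i0 <= i)%nat -> (i < j)%nat ->
       (1 - eps) * (Rdiv (INR i * (INR j - INR i)) (INR j)) <= Dmn i j /\
       Dmn i j <= (1 + eps) * (Rdiv (INR i * (INR j - INR i)) (INR j))) /\
    (forall i : nat, (i0 <= i)%nat ->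
       Rbar_le (Finite ((1 - eps) * INR i)) (Dlim i) /\
       Rbar_le (Dlim i) (Finite ((1 + eps) * INR i))).
Proof.
  destruct (archimed_cor1 eps Heps) as [N [HN HN0]].
  assert (HNp : 0 < INR N) by (apply lt_0_INR; lia).
  assert (Ke : 1 < eps * INR N).
  { apply Rmult_lt_compat_r with (r := INR N) in HN; auto.
    rewrite Rinv_l in HN; lra. }
  assert (Ki : forall i, (N <= i)%nat -> 1 <= eps * INR i /\ INR N <= INR i).
  { intros i Hi. assert (INR N <= INR i) by (apply le_INR; lia). nra. }
  exists N. split; [exact HN0|]. split.
  - intros i j Hi Hj. destruct (Ki i Hi) as [K1 K2].
    rewrite Dmn_val by lia.
    assert (0 < INR j) by (apply lt_0_INR; lia).
    assert (INR i < INR j) by (apply lt_INR; lia).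
    set (x := (INR j - INR i) / INR j).
    assert (0 < x) by (unfold x; apply Rdiv_lt_0_compat; lra).
    replace ((INR i + 1) * (INR j - INR i) / INR j) with ((INR i + 1) * x) by (unfold x; field; lra).
    replace (INR i * (INR j - INR i) / INR j) with (INR i * x) by (unfold x; field; lra).
    split; nra.
  - intros i Hi. destruct (Ki i Hi) as [K1 K2]. rewrite Dlim_val by lia.
    simpl. split; nra.
Qed.
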